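(* Let $K\ge 1$ be an integer, $T\ge 1$, and $\eta\in(0,1/2]$. Let $f^1,\dots,f^T$ be classifiers (e.g. the iterates produced by the worst-class adversarial training algorithm described in the context), and for each $k\in\{0,1,\dots,K\}$ and $t\in\{1,\dots,T\}$ let $L^{val}_k(f^t)\in[0,1]$. Define the weights $$w^{t}_{k}=\frac{\exp\left(\sum_{i=1}^{t-1}\eta\, L^{val}_{k}(f^i)\right)}{\sum_{j=0}^{K}\exp\left(\sum_{i=1}^{t-1}\eta\, L^{val}_{j}(f^i)\right)},\qquad k=0,\dots,K,\ t=1,\dots,T$$ (so $w^1_k=1/(K+1)$). Assume that for every $k\in\{0,\dots,K\}$, $$\frac{1}{T}\sum_{t=1}^{T}L^{val}_{k}(f^{t})\ \ge\ \frac{1}{1-\eta}\min_{1\le t\le T}L^{val}_{k}(f^{t}).$$ Then $$\max_{0\le k\le K}\ \min_{1\le t\le T}L^{val}_{k}(f^{t})\ \le\ \frac{1}{T}\sum_{t=1}^{T}\sum_{k=0}^{K}w^{t}_{k}\,L^{val}_{k}(f^{t})+\frac{\log(K+1)}{T\eta}.$$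
   Context: Setting: $K$-class classification with labels $\{1,\dots,K\}$. For a classifier $f$, $L^{val}_0(f)$ denotes its average loss on a validation set and $L^{val}_k(f)$ ($1\le k\le K$) its average loss on the validation examples of class $k$ (the loss used is the TRADES adversarial loss). The worst-class adversarial training algorithm initializes $f^0$ and, for $t=1,\dots,T$, sets $f^t=f^{t-1}-\lambda\sum_{k=0}^K w^t_k\,\partial L^{tr}_k(f^{t-1})/\partial f$, where $L^{tr}_0$ is the overall training loss and $L^{tr}_k$ the class-$k$ training loss, $\lambda>0$ a learning rate, and $w^t_k$ are the exponential (Hedge) weights given in the claim, computed from past validation losses. *)

(* Defs.v *)
From Stdlib Require Import Reals Lra Lia.
Open Scope R_scope.

Fixpoint sumR (a n : nat) (g : nat -> R) : R :=
  match n with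
  | O => 0
  | S n' => sumR a n' g + g (a + n')%nat
  end.

(* minR a n g = min_{a <= i <= a+n} g i   (n+1 terms, nonempty) *)
Fixpoint minR (a n : nat) (g : nat -> R) : R :=
  match n with
  | O => g a
  | S n' => Rmin (minR a n' g) (g (a + n)%nat)
  end.

(* maxR a n g = max_{a <= i <= a+n} g i   (n+1 terms, nonempty) *)
Fixpoint maxR (a n : nat) (g : nat -> R) : R :=
  match n with
  | O => g a
  | S n' => Rmax (maxR a n' g) (g (a + n)%nat)
  end.

Definition hedge_weight {F : Type} (K : nat) (eta : R) (Lval : nat -> F -> R)
  (f : nat -> F) (t k : nat) : R :=
  exp (sumR 1 (t - 1) (fun i => eta * Lval k (f i))) /
  sumR 0 (K + 1) (fun j => exp (sumR 1 (t - 1) (fun i => eta * Lval j (f i)))).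

(* Main.v *)
Require Import Defs.
From Stdlib Require Import Reals Lra Lia.
Open Scope R_scope.

Lemma sumR_ext a n g h : (forall i, (a <= i < a + n)%nat -> g i = h i) ->
  sumR a n g = sumR a n h.
Proof. induction n; simpl; intros H; auto. rewrite IHn by (intros; apply H; lia). rewrite H by lia. auto. Qed.

Lemma sumR_le a n g h : (forall i, (a <= i < a + n)%nat -> g i <= h i) ->
  sumR a n g <= sumR a n h.
Proof. induction n; simpl; intros H; [lra|]. assert (H1 := H (a+n)%nat ltac:(lia)).
  assert (sumR a n g <= sumR a n h) by (apply IHn; intros; apply H; lia). lra. Qed.

Lemma sumR_nonneg a n g : (forall i, (a <= i < a + n)%nat -> 0 <= g i) -> 0 <= sumR a n g.
Proof. intros H. replace 0 with (sumR a n (fun _ => 0)). apply sumR_le; auto.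
  induction n; simpl; auto. rewrite IHn; [lra|]. intros; apply H; lia. Qed.

Lemma sumR_plus a n g h : sumR a n (fun i => g i + h i) = sumR a n g + sumR a n h.
Proof. induction n; simpl; [lra|]. rewrite IHn. lra. Qed.

Lemma sumR_scal a n c g : sumR a n (fun i => c * g i) = c * sumR a n g.
Proof. induction n; simpl; [lra|]. rewrite IHn. lra. Qed.

Lemma sumR_term a n g j : (forall i, (a <= i < a + n)%nat -> 0 <= g i) ->
  (a <= j < a + n)%nat -> g j <= sumR a n g.
Proof. induction n; simpl; intros H Hj; [lia|].
  assert (0 <= sumR a n g) by (apply sumR_nonneg; intros; apply H; lia).
  destruct (Nat.eq_dec j (a+n)) as [->|Hne].
  - lra.
  - assert (g j <= sumR a n g) by (apply IHn; [intros; apply H; lia| lia]).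
    assert (0 <= g (a+n)%nat) by (apply H; lia). lra. Qed.

Lemma maxR_le a n g B : (forall i, (a <= i <= a + n)%nat -> g i <= B) -> maxR a n g <= B.
Proof. induction n; simpl; intros H.
  - apply H; lia.
  - apply Rmax_lub. apply IHn; intros; apply H; lia. apply H; lia. Qed.

Lemma exp_le_inv x y : exp x <= exp y -> x <= y.
Proof. intros H. destruct (Rle_lt_dec x y); auto. apply exp_increasing in r. lra. Qed.

Lemma chord eta x : 0 <= x <= 1 -> exp (eta * x) <= 1 + (exp eta - 1) * x.
Proof. intros Hx. set (p := eta * x).
  assert (E1 : exp (-p) * exp p = 1) by (rewrite <- exp_plus; replace (-p+p) with 0 by lra; apply exp_0).
  assert (E2 : exp eta = exp p * exp (eta - p)) by (rewrite <- exp_plus; f_equal; lra).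
  assert (H1 := exp_ineq1_le (-p)). assert (H2 := exp_ineq1_le (eta - p)).
  assert (Hp := exp_pos p).
  assert (A1 : 1 >= exp p * (1 - p)) by nra.
  assert (A2 : exp eta >= exp p * (1 + (eta - p))) by nra.
  assert (A : (1 - x) * 1 + x * exp eta >= (1-x) * (exp p * (1 - p)) + x * (exp p * (1 + (eta - p)))) by nra.
  assert ((1-x) * (exp p * (1 - p)) + x * (exp p * (1 + (eta - p))) = exp p) by (unfold p; ring).
  lra. Qed.
Lemma sumR_const a n : sumR a n (fun _ => 1) = INR n.
Proof. induction n; simpl sumR; [simpl; lra|]. rewrite IHn, S_INR. lra. Qed.

Theorem theorem1 (F : Type) (K T : nat) (eta : R)
  (f : nat -> F) (Lval : nat -> F -> R)
  (HK : (1 <= K)%nat) (HT : (1 <= T)%nat)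
  (Heta0 : 0 < eta) (Heta1 : eta <= 1 / 2)
  (HL : forall k t, (k <= K)%nat -> (1 <= t <= T)%nat ->
          0 <= Lval k (f t) <= 1)
  (Hassm : forall k, (k <= K)%nat ->
     / INR T * sumR 1 T (fun t => Lval k (f t)) >=
     / (1 - eta) * minR 1 (T - 1) (fun t => Lval k (f t))) :
  maxR 0 K (fun k => minR 1 (T - 1) (fun t => Lval k (f t))) <=
  / INR T * sumR 1 T (fun t =>
      sumR 0 (K + 1) (fun k => hedge_weight K eta Lval f t k * Lval k (f t)))
  + ln (INR (K + 1)) / (INR T * eta).
Proof.
  set (A := fun n j => sumR 1 n (fun i => eta * Lval j (f i))).
  set (Phi := fun n => sumR 0 (K+1) (fun j => exp (A n j))).
  set (g := fun t => sumR 0 (K + 1) (fun k => hedge_weight K eta Lval f t k * Lval k (f t))).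
  set (c := exp eta - 1).
  fold g.
  assert (Hc : eta <= c) by (unfold c; generalize (exp_ineq1_le eta); lra).
  assert (HPhipos : forall n, 0 < Phi n).
  { intros n. unfold Phi. apply Rlt_le_trans with (exp (A n 0%nat)). apply exp_pos.
    apply (sumR_term 0 (K+1) (fun j => exp (A n j)) 0%nat); [intros; left; apply exp_pos|lia]. }
  assert (Hgdef : forall n, Phi n * g (S n) = sumR 0 (K+1) (fun k => exp (A n k) * Lval k (f (S n)))).
  { intros n. unfold g. rewrite <- sumR_scal. apply sumR_ext. intros i _.
    unfold hedge_weight. replace (S n - 1)%nat with n by lia. fold (A n i).
    change (sumR 0 (K + 1) (fun j => exp (sumR 1 n (fun i0 => eta * Lval j (f i0))))) with (Phi n).
    assert (Hp := HPhipos n). clearbody Phi A. field. apply Rgt_not_eq, HPhipos. }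
  assert (Hgnn : forall t, (1 <= t <= T)%nat -> 0 <= g t).
  { intros t Ht. unfold g. apply sumR_nonneg. intros i Hi. apply Rmult_le_pos.
    unfold hedge_weight. apply Rmult_le_pos. left; apply exp_pos. left; apply Rinv_0_lt_compat.
    apply (HPhipos (t-1)%nat). apply HL; lia. }
  assert (Hstep : forall n, (n < T)%nat -> Phi (S n) <= Phi n * exp (c * g (S n))).
  { intros n Hn.
    assert (E : Phi (S n) = sumR 0 (K+1) (fun j => exp (A n j) * exp (eta * Lval j (f (S n))))).
    { unfold Phi. apply sumR_ext. intros i _. unfold A. simpl sumR. rewrite exp_plus. reflexivity. }
    rewrite E.
    apply Rle_trans with (sumR 0 (K+1) (fun j => exp (A n j) + c * (exp (A n j) * Lval j (f (S n))))).
    { apply sumR_le. intros i Hi. assert (Hx := HL i (S n) ltac:(lia) ltac:(lia)).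
      assert (Hch := chord eta _ Hx). fold c in Hch. assert (Hp := exp_pos (A n i)).
      rewrite <- Rmult_assoc, (Rmult_comm c), Rmult_assoc.
      replace (exp (A n i) + exp (A n i) * (c * Lval i (f (S n)))) with (exp (A n i) * (1 + c * Lval i (f (S n)))) by ring.
      apply Rmult_le_compat_l; lra. }
    rewrite sumR_plus, sumR_scal, <- Hgdef. fold (Phi n).
    assert (H1 := exp_ineq1_le (c * g (S n))). assert (H2 := HPhipos n).
    replace (Phi n + c * (Phi n * g (S n))) with (Phi n * (1 + c * g (S n))) by ring.
    apply Rmult_le_compat_l; lra. }
  assert (Hind : forall n, (n <= T)%nat -> Phi n <= INR (K+1) * exp (c * sumR 1 n g)).
  { induction n; intros Hn.
    - simpl sumR. rewrite Rmult_0_r, exp_0, Rmult_1_r. unfold Phi, A. simpl sumR.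
      rewrite exp_0, sumR_const. lra.
    - apply Rle_trans with (Phi n * exp (c * g (S n))). apply Hstep; lia.
      simpl sumR. replace (1 + n)%nat with (S n) by lia.
      rewrite Rmult_plus_distr_l, exp_plus, <- Rmult_assoc.
      apply Rmult_le_compat_r. left; apply exp_pos. apply IHn; lia. }
  set (S := sumR 1 T g).
  assert (HS : 0 <= S) by (apply sumR_nonneg; intros; apply Hgnn; lia).
  assert (HK1 : 0 < INR (K+1)) by (apply lt_0_INR; lia).
  assert (Hln : 0 <= ln (INR (K+1))).
  { destruct (Rle_lt_dec 0 (ln (INR (K+1)))) as [h|h]; auto.
    apply exp_increasing in h. rewrite exp_ln, exp_0 in h by auto.
    rewrite plus_INR in h. simpl INR in h. generalize (pos_INR K). lra. }
  assert (HTpos : 0 < INR T) by (apply lt_0_INR; lia).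
  assert (Hc2 : c * (1 - eta) <= eta).
  { unfold c. assert (H := exp_ineq1_le (- eta)).
    assert (exp eta * exp (- eta) = 1) by (rewrite <- exp_plus; replace (eta + - eta) with 0 by lra; apply exp_0).
    assert (Hp := exp_pos eta). nra. }
  apply maxR_le. intros k Hk. simpl in Hk.
  set (G := sumR 1 T (fun t => Lval k (f t))).
  assert (HG : eta * G <= ln (INR (K+1)) + c * S).
  { apply exp_le_inv. rewrite exp_plus, exp_ln by auto.
    apply Rle_trans with (Phi T); [|apply Hind; lia].
    unfold Phi. replace (eta * G) with (A T k).
    apply (sumR_term 0 (K+1) (fun j => exp (A T j)) k); [intros; left; apply exp_pos|lia].
    unfold A, G. apply sumR_scal. }
  assert (Hm := Hassm k ltac:(lia)). fold G in Hm.
  set (m := minR 1 (T - 1) (fun t => Lval k (f t))) in *.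
  assert (Hm2 : m <= (1 - eta) * (/ INR T * G)).
  { apply Rge_le in Hm. apply Rmult_le_compat_l with (r := 1 - eta) in Hm; [|lra].
    rewrite <- Rmult_assoc, Rinv_r, Rmult_1_l in Hm by lra. exact Hm. }
  assert (Hkey : (1 - eta) * G <= ln (INR (K+1)) / eta + S).
  { apply Rmult_le_reg_l with eta; auto.
    assert (eta * (ln (INR (K + 1)) / eta) = ln (INR (K+1))) by (field; lra).
    rewrite Rmult_plus_distr_l, H.
    assert (c * (1-eta) * S <= eta * S) by (apply Rmult_le_compat_r; auto).
    assert ((1-eta) * (ln (INR (K+1)) + c * S) <= ln (INR (K+1)) + eta * S) by nra.
    assert (0 <= 1 - eta) by lra.
    assert ((1 - eta) * (eta * G) <= (1-eta) * (ln (INR (K+1)) + c * S)) by (apply Rmult_le_compat_l; auto).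
    nra. }
  apply Rle_trans with (/ INR T * ((1 - eta) * G)). { rewrite <- Rmult_assoc, (Rmult_comm (/ INR T)), Rmult_assoc; auto. }
  replace (ln (INR (K + 1)) / (INR T * eta)) with (/ INR T * (ln (INR (K+1)) / eta)) by (field; lra).
  rewrite <- Rmult_plus_distr_l. apply Rmult_le_compat_l. left; apply Rinv_0_lt_compat; auto.
  rewrite Rplus_comm. exact Hkey.
Qed.
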